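(* Let $\mathcal{R}=\mathbb{C}[\xi_0,\xi_1,\xi_2,\xi_3]$. The sequence of $\mathcal{R}$-modules $\mathcal{R}^3\xleftarrow{D_0(\xi)^t}\mathcal{R}^4\xleftarrow{D_1(\xi)^t}\mathcal{R}^1$ is exact, i.e. $\ker D_0(\xi)^t=\operatorname{Im}D_1(\xi)^t$ in $\mathcal{R}^4$.
   Context: The polynomial matrices are $D_0(\xi)^t=\frac1i\begin{pmatrix}-(\xi_2+i\xi_3)&\xi_0-i\xi_1&0&0\\-(\xi_0+i\xi_1)&-(\xi_2-i\xi_3)&-(\xi_2+i\xi_3)&\xi_0-i\xi_1\\0&0&-(\xi_0+i\xi_1)&-(\xi_2-i\xi_3)\end{pmatrix}$, $D_1(\xi)^t=\frac1i\begin{pmatrix}-\xi_0+i\xi_1\\-\xi_2-i\xi_3\\\xi_2-i\xi_3\\-\xi_0-i\xi_1\end{pmatrix}$, acting on column vectors of polynomials by matrix multiplication (these are the transposed symbols of the 2-Cauchy–Fueter operators, $\partial_{x_j}\mapsto\frac1i\xi_j$). *)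

(* Defs.v *)
From mathcomp Require Import all_boot all_algebra.
From mathcomp Require Import reals complex.
From mathcomp Require Import mpoly.
Set Implicit Arguments. Unset Strict Implicit. Unset Printing Implicit Defensive.
Import GRing.Theory Num.Theory.
Local Open Scope ring_scope.

Notation Rpoly R := {mpoly (R[i])[4]}.

Definition xi (R : realType) (j : nat) : Rpoly R := 'X_(inord j).

Definition iP (R : realType) : Rpoly R := ('i : R[i])%:MP.

Definition invI (R : realType) : Rpoly R := (('i : R[i])^-1)%:MP.

Definition D0t_entry (R : realType) (r c : nat) : Rpoly R :=
  let x0 := xi R 0 in let x1 := xi R 1 in
  let x2 := xi R 2 in let x3 := xi R 3 in
  let I := iP R in
  match r, c with
  | 0, 0 => - (x2 + I * x3)
  | 0, 1 => x0 - I * x1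
  | 1, 0 => - (x0 + I * x1)
  | 1, 1 => - (x2 - I * x3)
  | 1, 2 => - (x2 + I * x3)
  | 1, 3 => x0 - I * x1
  | 2, 2 => - (x0 + I * x1)
  | 2, 3 => - (x2 - I * x3)
  | _, _ => 0
  end.

Definition D0t (R : realType) : 'M[Rpoly R]_(3, 4) :=
  \matrix_(r < 3, c < 4) (invI R * D0t_entry R r c).

Definition D1t_entry (R : realType) (r : nat) : Rpoly R :=
  let x0 := xi R 0 in let x1 := xi R 1 in
  let x2 := xi R 2 in let x3 := xi R 3 in
  let I := iP R in
  match r with
  | 0 => - x0 + I * x1
  | 1 => - x2 - I * x3
  | 2 => x2 - I * x3
  | 3 => - x0 - I * x1
  | _ => 0
  end.

Definition D1t (R : realType) : 'M[Rpoly R]_(4, 1) :=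
  \matrix_(r < 4, c < 1) (invI R * D1t_entry R r).

(* Main.v *)
Require Import Defs.
From mathcomp Require Import all_boot all_algebra.
From mathcomp Require Import reals complex.
From mathcomp Require Import mpoly.
From mathcomp Require Import ring.
Import GRing.Theory Num.Theory.
Local Open Scope ring_scope.

Section Comp.
Variable (R0 : realType) (n k : nat) (lf : n.-tuple {mpoly R0[i][k]}).
Lemma compM (x y : {mpoly R0[i][n]}) : (x * y) \mPo lf = (x \mPo lf) * (y \mPo lf).
Proof. exact: rmorphM. Qed.
Lemma compXn (x : {mpoly R0[i][n]}) e : (x ^+ e) \mPo lf = (x \mPo lf) ^+ e.
Proof. exact: rmorphXn. Qed.
Lemma compProd N (F : 'I_N -> {mpoly R0[i][n]}) :
  (\prod_(j < N) F j) \mPo lf = \prod_(j < N) (F j \mPo lf).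
Proof. exact: rmorph_prod. Qed.
Lemma compSum (I : Type) (s : seq I) (F : I -> {mpoly R0[i][n]}) :
  (\sum_(j <- s) F j) \mPo lf = \sum_(j <- s) (F j \mPo lf).
Proof. exact: raddf_sum. Qed.
Lemma compC c : (c%:MP : {mpoly R0[i][n]}) \mPo lf = c%:MP.
Proof. exact: comp_mpolyC. Qed.
Lemma compX m : ('X_[m] : {mpoly R0[i][n]}) \mPo lf = \prod_(j < n) (tnth lf j) ^+ (m j).
Proof. exact: comp_mpolyX. Qed.
End Comp.

Lemma comp_comp (R0 : realType) n k l (p : {mpoly R0[i][n]})
  (lg : n.-tuple {mpoly R0[i][k]}) (lf : k.-tuple {mpoly R0[i][l]}) :
  (p \mPo lg) \mPo lf = p \mPo [tuple (tnth lg i \mPo lf) | i < n].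
Proof.
rewrite {1}(mpolyE p) {3}(mpolyE p) (@compSum _ _ _ lg) (@compSum _ _ _ lf) (@compSum _ _ _ [tuple (tnth lg i \mPo lf) | i < n]).
apply: eq_bigr => m _.
rewrite -!mul_mpolyC (@compM _ _ _ lg) (@compM _ _ _ lf) (@compM _ _ _ [tuple (tnth lg i \mPo lf) | i < n]). rewrite (@compC _ _ _ lg) (@compC _ _ _ lf) (@compC _ _ _ [tuple (tnth lg i \mPo lf) | i < n]). 
rewrite (@compX _ _ _ lg) (@compX _ _ _ [tuple (tnth lg i \mPo lf) | i < n]) (@compProd _ _ _ lf).
apply: congr1.
apply: eq_bigr => j _. rewrite (@compXn _ _ _ lf) tnth_mktuple. reflexivity. Qed.

Lemma comp_inv (R0 : realType) n (p : {mpoly R0[i][n]})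
  (lg : n.-tuple {mpoly R0[i][n]}) (lf : n.-tuple {mpoly R0[i][n]}) :
  (forall i, tnth lg i \mPo lf = 'X_i) -> (p \mPo lg) \mPo lf = p.
Proof.
move=> h; rewrite comp_comp -[RHS]comp_mpoly_id.
have ->: [tuple tnth lg j \mPo lf | j < n] = [tuple 'X_j | j < n].
  apply: eq_from_tnth => j; rewrite !tnth_mktuple h. reflexivity.
reflexivity. Qed.

Lemma cert (T : comNzRingType) (H I X L A B : T) :
  H * 2 = 1 -> I * I = -1 -> L = X + (H*2-1)*A + (I*I+1)*B -> L = X.
Proof. by move=> -> -> ->; rewrite subrr addNr !mul0r !addr0. Qed.

Lemma divX (R : comRingType) n (j k : 'I_n) (p q : {mpoly R[n]}) :
  j != k -> 'X_j * p = 'X_k * q -> exists r, q = 'X_j * r.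
Proof.
move=> njk E.
have supp m : m \in msupp q -> (0 < m j)%N.
  rewrite mcoeff_msupp; apply: contraR; rewrite -eqn0Ngt => /eqP mj0.
  have := mcoeffMX q U_(k) m; rewrite mulrC -E mulrC => <-.
  rewrite mcoeff_eq0 (perm_mem (msuppMX _ _)); apply/mapP => -[m' _ /mnmP/(_ j)].
  rewrite !mnmDE !mnm1E eqxx mj0; case: eqP => [kj|_]; first by rewrite kj eqxx in njk. rewrite /= => /eqP.
  by rewrite -addn1 eqn_add2l.
exists (\sum_(m <- msupp q) q@_m *: 'X_[m - U_(j)]).
rewrite big_distrr /= [LHS]mpolyE big_seq [RHS]big_seq; apply: eq_bigr => m /supp mj.
rewrite -scalerAr -mpolyXD addmC submK //; apply/mnm_lepP => i.
by rewrite mnm1E; case: eqP => [<-|].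
Qed.

Section Main.
Variable R : realType.
Local Notation x0 := (xi R 0).
Local Notation x1 := (xi R 1).
Local Notation x2 := (xi R 2).
Local Notation x3 := (xi R 3).
Local Notation I := (iP R).
Local Notation K := (invI R).
Definition Hh : Rpoly R := ((2%:R : R[i])^-1)%:MP.
Local Notation H := Hh.

Lemma II : I * I = -1.
Proof.
rewrite /iP -rmorphM /= -expr2 sqr_i.
rewrite rmorphN rmorph1. reflexivity.
Qed.

Lemma KI : K * I = 1.
Proof.
have inz : ('i : R[i]) != 0.
  exact: neq0Ci.
rewrite /iP /invI -rmorphM /= mulVf ?rmorph1 //.
Qed.

Lemma H2 : H * 2 = 1.
Proof.
have e : (2 : Rpoly R) = (2%:R : R[i])%:MP by rewrite rmorph_nat.
rewrite /Hh e -rmorphM /= mulVf ?rmorph1 //.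
by rewrite pnatr_eq0.
Qed.


Lemma xi_comp (lq : 4.-tuple (Rpoly R)) j : (j < 4)%N -> xi R j \mPo lq = lq`_j.
Proof. move=> hj; rewrite /xi comp_mpolyXU inordK //. Qed.

Lemma iP_comp (lq : 4.-tuple (Rpoly R)) : I \mPo lq = I.
Proof. exact: comp_mpolyC. Qed.
Lemma H_comp (lq : 4.-tuple (Rpoly R)) : H \mPo lq = H.
Proof. exact: comp_mpolyC. Qed.
Lemma cM (lq : 4.-tuple (Rpoly R)) (x y : Rpoly R) : (x * y) \mPo lq = (x \mPo lq) * (y \mPo lq).
Proof. exact: rmorphM. Qed.
Lemma cD (lq : 4.-tuple (Rpoly R)) (x y : Rpoly R) : (x + y) \mPo lq = (x \mPo lq) + (y \mPo lq).
Proof. exact: rmorphD. Qed.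
Lemma cB (lq : 4.-tuple (Rpoly R)) (x y : Rpoly R) : (x - y) \mPo lq = (x \mPo lq) - (y \mPo lq).
Proof. exact: rmorphB. Qed.
Lemma cN (lq : 4.-tuple (Rpoly R)) (x : Rpoly R) : (- x) \mPo lq = - (x \mPo lq).
Proof. exact: rmorphN. Qed.

Definition phi : 4.-tuple (Rpoly R) :=
  [tuple x0 + I * x1; x0 - I * x1; x2 + I * x3; x2 - I * x3].
Definition psi : 4.-tuple (Rpoly R) :=
  [tuple H * (x0 + x1); - (H * I) * (x0 - x1); H * (x2 + x3); - (H * I) * (x2 - x3)].

Lemma psi0 : psi`_0 = H * (x0 + x1). Proof. reflexivity. Qed.
Lemma psi1 : psi`_1 = - (H * I) * (x0 - x1). Proof. reflexivity. Qed.
Lemma psi2 : psi`_2 = H * (x2 + x3). Proof. reflexivity. Qed.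
Lemma psi3 : psi`_3 = - (H * I) * (x2 - x3). Proof. reflexivity. Qed.
Lemma phi0 : phi`_0 = x0 + I * x1. Proof. reflexivity. Qed.
Lemma phi1 : phi`_1 = x0 - I * x1. Proof. reflexivity. Qed.
Lemma phi2 : phi`_2 = x2 + I * x3. Proof. reflexivity. Qed.
Lemma phi3 : phi`_3 = x2 - I * x3. Proof. reflexivity. Qed.

Lemma psi_a : (x0 + I * x1) \mPo psi = x0.
Proof. rewrite cD cM iP_comp !xi_comp // psi0 psi1.
apply: (@cert _ _ _ _ _ (x0) (- (H * (x0 - x1))) H2 II). ring. Qed.
Lemma psi_ab : (x0 - I * x1) \mPo psi = x1.
Proof. rewrite cB cM iP_comp !xi_comp // psi0 psi1.
apply: (@cert _ _ _ _ _ (x1) (H * (x0 - x1)) H2 II). ring. Qed.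
Lemma psi_b : (x2 + I * x3) \mPo psi = x2.
Proof. rewrite cD cM iP_comp !xi_comp // psi2 psi3.
apply: (@cert _ _ _ _ _ (x2) (- (H * (x2 - x3))) H2 II). ring. Qed.
Lemma psi_bb : (x2 - I * x3) \mPo psi = x3.
Proof. rewrite cB cM iP_comp !xi_comp // psi2 psi3.
apply: (@cert _ _ _ _ _ (x3) (H * (x2 - x3)) H2 II). ring. Qed.

Lemma xiO k (hk : (k < 4)%N) : 'X_(Ordinal hk) = xi R k.
Proof.
rewrite /xi. have -> : Ordinal hk = inord k :> 'I_4 by apply: val_inj; rewrite /= inordK.
reflexivity.
Qed.

Lemma phipsi (p : Rpoly R) : (p \mPo psi) \mPo phi = p.
Proof.
apply: comp_inv => j.
case: j => [[|[|[|[|//]]]] hj]; rewrite (tnth_nth 0) xiO.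
- rewrite psi0 cM cD H_comp !xi_comp // phi0 phi1.
  apply: (@cert _ _ _ _ _ (x0) 0 H2 II). ring.
- rewrite psi1 cM cB cN cM H_comp iP_comp !xi_comp // phi0 phi1.
  apply: (@cert _ _ _ _ _ (x1) (- (2 * H * x1)) H2 II). ring.
- rewrite psi2 cM cD H_comp !xi_comp // phi2 phi3.
  apply: (@cert _ _ _ _ _ (x2) 0 H2 II). ring.
- rewrite psi3 cM cB cN cM H_comp iP_comp !xi_comp // phi2 phi3.
  apply: (@cert _ _ _ _ _ (x3) (- (2 * H * x3)) H2 II). ring.
Qed.

Lemma divGen (j k : nat) (hj : (j < 4)%N) (hk : (k < 4)%N) (l1 l2 : Rpoly R) (p q : Rpoly R) :
  j != k -> l1 \mPo psi = xi R j -> l2 \mPo psi = xi R k -> xi R j \mPo phi = l1 ->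
  l1 * p = l2 * q -> exists r, q = l1 * r.
Proof.
move=> njk e1 e2 e3 E.
have E' := congr1 (comp_mpoly psi) E.
rewrite !cM e1 e2 /xi in E'.
have njk' : (inord j : 'I_4) != inord k.
  by rewrite -(inj_eq val_inj) /= !inordK.
have [r Er] := @divX _ _ _ _ _ _ njk' E'.
exists (r \mPo phi).
rewrite -[q]phipsi Er cM -e3. reflexivity.
Qed.

Lemma divL1 (p q : Rpoly R) : (x0 - I * x1) * p = (x2 + I * x3) * q ->
  exists r, q = (x0 - I * x1) * r.
Proof.
apply: (@divGen 1 2) => //. exact: psi_ab. exact: psi_b. rewrite xi_comp //.
Qed.

Lemma divL2 (p q : Rpoly R) : (x0 + I * x1) * p = (x2 - I * x3) * q ->
  exists r, q = (x0 + I * x1) * r.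
Proof.
apply: (@divGen 0 3) => //. exact: psi_a. exact: psi_bb. rewrite xi_comp //.
Qed.

Definition ev : 'I_4 -> R[i] := fun j => ((j : nat) == 0%N)%:R.

Lemma ev_xi j : (j < 4)%N -> meval ev (xi R j) = (j == 0%N)%:R.
Proof. move=> hj; rewrite /xi mevalXU /ev inordK //. Qed.
Lemma ev_I : meval ev I = 'i.
Proof. exact: mevalC. Qed.
Lemma eM (x y : Rpoly R) : meval ev (x * y) = meval ev x * meval ev y.
Proof. exact: mevalM. Qed.
Lemma eD (x y : Rpoly R) : meval ev (x + y) = meval ev x + meval ev y.
Proof. exact: mevalD. Qed.
Lemma eB (x y : Rpoly R) : meval ev (x - y) = meval ev x - meval ev y.
Proof. exact: mevalB. Qed.

Lemma eN (x : Rpoly R) : meval ev (- x) = - meval ev x.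
Proof. exact: mevalN. Qed.

Lemma nz (p : Rpoly R) : meval ev p = 1 -> p != 0.
Proof.
move=> h; apply/eqP => p0; move: h; rewrite p0 meval0 => /eqP.
rewrite eq_sym oner_eq0. done.
Qed.

Lemma nz_a : x0 + I * x1 != 0.
Proof. apply: nz; rewrite eD eM ev_I !ev_xi //= ?mulr0 ?addr0 ?subr0 ?mulr1 ?mul0r ?addr0 ?oppr0 ?addr0 ?mulr1. reflexivity. Qed.
Lemma nz_ab : x0 - I * x1 != 0.
Proof. apply: nz; rewrite !(eD, eN, eM) ev_I !ev_xi //= ?mulr0 ?addr0 ?subr0 ?mulr1 ?mul0r ?addr0 ?oppr0 ?addr0 ?mulr1. reflexivity. Qed.
Lemma nz_S : (x0 + I * x1) * (x0 - I * x1) + (x2 + I * x3) * (x2 - I * x3) != 0.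
Proof.
apply: nz; rewrite !(eD, eN, eM) ev_I !ev_xi //= ?mulr0 ?addr0 ?subr0 ?mulr1 ?mul0r ?addr0 ?oppr0 ?addr0 ?mulr1. reflexivity.
Qed.

Lemma Kne0 : K != 0.
Proof.
apply/eqP => h; have := KI; rewrite h mul0r => /eqP; rewrite eq_sym oner_eq0. done.
Qed.

Lemma cancelK (s t : Rpoly R) : K * s = t -> t = 0 -> s = 0.
Proof.
move=> <- /eqP; rewrite mulf_eq0 (negbTE Kne0) /= => /eqP. done.
Qed.

Lemma cancelL (l s : Rpoly R) : l != 0 -> l * s = 0 -> s = 0.
Proof.
move=> hl /eqP; rewrite mulf_eq0 (negbTE hl) /= => /eqP. done.
Qed.

Ltac simp0 := rewrite ?subrr ?mulr0 ?oppr0 ?addr0 ?add0r ?subr0 ?mulr0 ?oppr0 ?addr0 ?add0r ?subr0.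

Arguments cancelK {s t}. Arguments cancelL {l s}. Arguments divL1 {p q}. Arguments divL2 {p q}.

Lemma D0D1 : D0t R *m D1t R = 0.
Proof.
apply/matrixP => r c; rewrite !mxE !big_ord_recl big_ord0 !mxE /=.
case: r => [[|[|[|//]]] hr] /=; ring.
Qed.

Lemma fwd (v : 'cV[Rpoly R]_4) : D0t R *m v = 0 -> exists w : 'cV[Rpoly R]_1, v = D1t R *m w.
Proof.
move=> /matrixP E.
have e0 := E 0 0; have e1 := E 1 0; have e2 := E 2 0.
rewrite !mxE !big_ord_recl big_ord0 !mxE /= in e0.
rewrite !mxE !big_ord_recl big_ord0 !mxE /= in e1.
rewrite !mxE !big_ord_recl big_ord0 !mxE /= in e2.
move: e0 e1 e2.
set v0 := v ord0 0. set v1 := v (lift ord0 ord0) 0.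
set v2 := v (lift ord0 (lift ord0 ord0)) 0. set v3 := v (lift ord0 (lift ord0 (lift ord0 ord0))) 0.
move=> e0 e1 e2.
have r0 : (x0 - I * x1) * v1 - (x2 + I * x3) * v0 = 0.
  apply: (cancelK ^~ e0). ring.
have r1 : - (x0 + I * x1) * v0 - (x2 - I * x3) * v1 - (x2 + I * x3) * v2 + (x0 - I * x1) * v3 = 0.
  apply: (cancelK ^~ e1). ring.
have r2 : (x0 + I * x1) * (- v2) - (x2 - I * x3) * v3 = 0.
  apply: (cancelK ^~ e2). ring.
have [w Ev0] := divL1 (subr0_eq r0).
have [u Ev3] := divL2 (subr0_eq r2).
have Ev1 : v1 = (x2 + I * x3) * w.
  apply/subr0_eq/(cancelL nz_ab).
  rewrite (_ : (x0 - I * x1) * (v1 - (x2 + I * x3) * w) =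
     ((x0 - I * x1) * v1 - (x2 + I * x3) * v0) + (x2 + I * x3) * (v0 - (x0 - I * x1) * w)); last by ring.
  rewrite r0 Ev0; simp0. reflexivity.
have Ev2 : v2 = - ((x2 - I * x3) * u).
  apply/subr0_eq/(cancelL nz_a).
  rewrite (_ : (x0 + I * x1) * (v2 - - ((x2 - I * x3) * u)) =
     - ((x0 + I * x1) * (- v2) - (x2 - I * x3) * v3) - (x2 - I * x3) * (v3 - (x0 + I * x1) * u)); last by ring.
  rewrite r2 Ev3; simp0. reflexivity.
have Euw : u = w.
  apply/subr0_eq/(cancelL nz_S).
  rewrite (_ : ((x0 + I * x1) * (x0 - I * x1) + (x2 + I * x3) * (x2 - I * x3)) * (u - w) =
     (- (x0 + I * x1) * v0 - (x2 - I * x3) * v1 - (x2 + I * x3) * v2 + (x0 - I * x1) * v3)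
     + (x0 + I * x1) * (v0 - (x0 - I * x1) * w) + (x2 - I * x3) * (v1 - (x2 + I * x3) * w)
     + (x2 + I * x3) * (v2 + (x2 - I * x3) * u) - (x0 - I * x1) * (v3 - (x0 + I * x1) * u)); last by ring.
  rewrite r1 {1}Ev0 {1}Ev1 {1}Ev2 {1}Ev3 ?opprK ?addNr; simp0. reflexivity.
exists (const_mx (- I * w)).
apply/matrixP => r c; rewrite ord1 !mxE big_ord1 !mxE.
case: r => [[|[|[|[|//]]]] hr] /=.
- rewrite (_ : Ordinal hr = ord0); last by apply: val_inj.
  rewrite -/v0 Ev0. transitivity ((K * I) * ((x0 - I * x1) * w)); first by rewrite KI mul1r.
  ring.
- rewrite (_ : Ordinal hr = lift ord0 ord0); last by apply: val_inj.
  rewrite -/v1 Ev1. transitivity ((K * I) * ((x2 + I * x3) * w)); first by rewrite KI mul1r.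
  ring.
- rewrite (_ : Ordinal hr = lift ord0 (lift ord0 ord0)); last by apply: val_inj.
  rewrite -/v2 Ev2 Euw. transitivity ((K * I) * (- ((x2 - I * x3) * w))); first by rewrite KI mul1r.
  ring.
- rewrite (_ : Ordinal hr = lift ord0 (lift ord0 (lift ord0 ord0))); last by apply: val_inj.
  rewrite -/v3 Ev3 Euw. transitivity ((K * I) * ((x0 + I * x1) * w)); first by rewrite KI mul1r.
  ring.
Qed.

End Main.

Theorem proposition3p3 (R : realType) (v : 'cV[Rpoly R]_4) :
  D0t R *m v = 0 <-> exists w : 'cV[Rpoly R]_1, v = D1t R *m w.
Proof.
split; first exact: fwd.
move=> [w ->]; rewrite mulmxA D0D1 mul0mx. reflexivity.
Qed.
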